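(* Let $(A,\circ,[\cdot,\cdot])$ be a finite-dimensional dual pre-Poisson algebra and let $r\in A\otimes A$ be symmetric and nondegenerate. Let $\mathcal{B}(x,y)=\langle\tilde r^{-1}(x),y\rangle$ for $x,y\in A$. Then $r$ is a solution of the permutative-Leibniz Yang–Baxter equation if and only if, for all $x,y,z\in A$, $$\mathcal{B}(x\circ y,z)=\mathcal{B}(y,x\circ z)+\mathcal{B}(x,y\blacksquare z),\qquad \mathcal{B}([x,y],z)=-\mathcal{B}(y,[x,z])+\mathcal{B}(x,y\square z).$$
   Context: Field $\mathbb{F}$ of characteristic $0$. Dual pre-Poisson algebra: $x\circ(y\circ z)=(x\circ y)\circ z=(y\circ x)\circ z$; $[x,[y,z]]=[[x,y],z]+[y,[x,z]]$; $[x,y\circ z]=[x,y]\circ z+y\circ[x,z]$; $[x\circ y,z]=x\circ[y,z]+y\circ[x,z]$; $[x,y]\circ z=-[y,x]\circ z$. $x\blacksquare y=x\circ y-y\circ x$, $x\square y=[x,y]+[y,x]$. $\tilde r:A^*\to A$ is $\langle\tilde r(u^* ),v^*\rangle=\langle r,u^*\otimes v^*\rangle$; $r$ nondegenerate means $\tilde r$ invertible; symmetric means flip-invariant. PLYBE: for $r=\sum_i a_i\otimes b_i$, $\mathbf{P}(r)=\sum_{i,j}\big(a_i\otimes a_j\otimes b_i\circ b_j-a_i\otimes b_i\circ a_j\otimes b_j+a_i\blacksquare a_j\otimes b_j\otimes b_i\big)$, $\mathbf{L}(r)=\sum_{i,j}\big(a_i\otimes a_j\otimes[b_i,b_j]+a_i\otimes[b_i,a_j]\otimes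 b_j-a_i\square a_j\otimes b_i\otimes b_j\big)$; $r$ is a solution if $\mathbf{P}(r)=\mathbf{L}(r)=0$. *)

(* Defs.v *)
From HB Require Import structures.
From mathcomp Require Import all_boot all_order all_algebra.
Set Implicit Arguments. Unset Strict Implicit. Unset Printing Implicit Defensive.
Import Order.TTheory GRing.Theory Num.Theory.
Local Open Scope ring_scope.

(* A finite-dimensional F-vector space of dimension n is represented by the
   coordinate space 'rV[F]_n (row vectors); its dual A^* is identified with
   'rV[F]_n via the dual basis, the pairing being <x, f> = sum_i x_i f_i. *)
Section DPP.
Variables (F : fieldType) (n : nat).
Local Notation A := 'rV[F]_n.

Definition pairing (x f : A) : F := (x *m f^T) 0 0.

Definition bilinear_op (op : A -> A -> A) : Prop :=
  (forall (a : F) x y z, op (a *: x + y) z = a *: op x z + op y z) /\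
  (forall (a : F) x y z, op x (a *: y + z) = a *: op x y + op x z).

Definition dual_pre_Poisson (circ br : A -> A -> A) : Prop :=
  bilinear_op circ /\ bilinear_op br /\
      (forall x y z, circ x (circ y z) = circ (circ x y) z /\
                     circ (circ x y) z = circ (circ y x) z) /\
      (forall x y z, br x (br y z) = br (br x y) z + br y (br x z)) /\
      (forall x y z, br x (circ y z) = circ (br x y) z + circ y (br x z)) /\
      (forall x y z, br (circ x y) z = circ x (br y z) + circ y (br x z)) /\
      (forall x y z, circ (br x y) z = - circ (br y x) z).

Definition bsq (circ : A -> A -> A) x y := circ x y - circ y x.
Definition ssq (br : A -> A -> A) x y := br x y + br y x.

(* 3-tensors in A ⊗ A ⊗ A, in coordinates *)
Definition tensor3 (u v w : A) (i j k : 'I_n) : F := u 0 i * v 0 j * w 0 k.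

(* P(r) and L(r) for r = sum_{l < m} a l ⊗ b l *)
Definition Pten (circ : A -> A -> A) m (a b : 'I_m -> A) (i j k : 'I_n) : F :=
  \sum_(p < m) \sum_(q < m)
    (tensor3 (a p) (a q) (circ (b p) (b q)) i j k
     - tensor3 (a p) (circ (b p) (a q)) (b q) i j k
     + tensor3 (bsq circ (a p) (a q)) (b q) (b p) i j k).

Definition Lten (br : A -> A -> A) m (a b : 'I_m -> A) (i j k : 'I_n) : F :=
  \sum_(p < m) \sum_(q < m)
    (tensor3 (a p) (a q) (br (b p) (b q)) i j k
     + tensor3 (a p) (br (b p) (a q)) (b q) i j k
     - tensor3 (ssq br (a p) (a q)) (b p) (b q) i j k).

(* A 2-tensor r ∈ A ⊗ A is given by its coefficient matrix R:
   r = sum_{i,j} R i j e_i ⊗ e_j = sum_i e_i ⊗ (row i R). *)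
Definition tensor_of m (a b : 'I_m -> A) : 'M[F]_n :=
  \sum_(p < m) (a p)^T *m (b p).

Definition std_a (i : 'I_n) : A := delta_mx 0 i.
Definition std_b (R : 'M[F]_n) (i : 'I_n) : A := row i R.

(* r is a solution of the PLYBE (computed on the decomposition
   r = sum_i e_i ⊗ row_i R; P, L do not depend on the decomposition). *)
Definition PLYBE_solution (circ br : A -> A -> A) (R : 'M[F]_n) : Prop :=
  (forall i j k, Pten circ (@std_a) (std_b R) i j k = 0) /\
  (forall i j k, Lten br (@std_a) (std_b R) i j k = 0).

(* r~ : A^* -> A,  <r~(u), v> = <r, u ⊗ v> = u R v^T *)
Definition rtilde (R : 'M[F]_n) (u : A) : A := u *m R.

Definition symmetric_tensor (R : 'M[F]_n) : Prop := R^T = R.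
Definition nondegenerate_tensor (R : 'M[F]_n) : Prop := R \in unitmx.

Definition rtilde_inv (R : 'M[F]_n) (x : A) : A := x *m invmx R.

Definition Bform (R : 'M[F]_n) (x y : A) : F := pairing (rtilde_inv R x) y.

End DPP.

(* Main.v *)
Require Import Defs.
From mathcomp Require Import all_boot all_order all_algebra.
From mathcomp Require Import ring.
Import GRing.Theory.
Local Open Scope ring_scope.

Section Helpers.
Variables (F : fieldType) (n : nat).
Local Notation V := 'rV[F]_n.

Lemma bil_l0 (op : V -> V -> V) : bilinear_op op -> forall z, op 0 z = 0.
Proof.
move=> h z; have e := h.1 1 0 0 z; rewrite scaler0 addr0 scale1r in e.
by apply: (addrI (op 0 z)); rewrite addr0 -e.
Qed.

Lemma bil_r0 (op : V -> V -> V) : bilinear_op op -> forall z, op z 0 = 0.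
Proof.
move=> h z; have e := h.2 1 z 0 0; rewrite scaler0 addr0 scale1r in e.
by apply: (addrI (op z 0)); rewrite addr0 -e.
Qed.

Lemma bil_suml (op : V -> V -> V) (h : bilinear_op op) m (c : 'I_m -> F) x z :
  op (\sum_(i < m) c i *: x i) z = \sum_(i < m) c i *: op (x i) z.
Proof.
elim/big_rec2: _ => [|i s t _ <-]; first exact: bil_l0.
by rewrite h.1.
Qed.

Lemma bil_sumr (op : V -> V -> V) (h : bilinear_op op) m (c : 'I_m -> F) x z :
  op z (\sum_(i < m) c i *: x i) = \sum_(i < m) c i *: op z (x i).
Proof.
elim/big_rec2: _ => [|i s t _ <-]; first exact: bil_r0.
by rewrite h.2.
Qed.

Lemma bsq_bil (op : V -> V -> V) : bilinear_op op -> bilinear_op (bsq op).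
Proof.
move=> h; split=> a x y z; rewrite /bsq h.1 h.2 opprD addrACA scalerBr //.
Qed.

Lemma ssq_bil (op : V -> V -> V) : bilinear_op op -> bilinear_op (ssq op).
Proof.
move=> h; split=> a x y z; rewrite /ssq h.1 h.2 addrACA scalerDr //.
Qed.

Lemma B_linl (R : 'M[F]_n) (a : F) (x y z : V) : Bform R (a *: x + y) z = a * Bform R x z + Bform R y z.
Proof.
rewrite /Bform /pairing /rtilde_inv mulmxDl mulmxDl -(scalemxAl a x) -scalemxAl.
by rewrite !mxE.
Qed.

Lemma B_linr (R : 'M[F]_n) (a : F) (x y z : V) : Bform R x (a *: y + z) = a * Bform R x y + Bform R x z.
Proof.
rewrite /Bform /pairing /rtilde_inv linearD linearZ /= mulmxDr -scalemxAr.
by rewrite !mxE.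
Qed.

Lemma lin_basis (f : V -> F) (hf : forall a x y, f (a *: x + y) = a * f x + f y)
  (R : 'M[F]_n) (hR : R \in unitmx) (h0 : forall i, f (row i R) = 0) x : f x = 0.
Proof.
have f0 : f 0 = 0.
  have e := hf 1 0 0; rewrite scaler0 addr0 mul1r in e.
  by apply: (addrI (f 0)); rewrite addr0 -e.
rewrite -(mulmxKV hR x) mulmx_sum_row.
elim/big_rec: _ => [|i s _ hs]; first exact: f0.
by rewrite hf h0 hs mulr0 addr0.
Qed.

Lemma B_rowl (R : 'M[F]_n) (hR : R \in unitmx) a (w : V) : Bform R (row a R) w = w 0 a.
Proof.
by rewrite /Bform /pairing /rtilde_inv rowE mulmxK // -rowE !mxE.
Qed.

Lemma B_sym (R : 'M[F]_n) (hs : R^T = R) (x y : V) : Bform R x y = Bform R y x.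
Proof.
rewrite /Bform /pairing /rtilde_inv.
transitivity (((y *m invmx R *m x^T)^T) 0 0); last by rewrite mxE.
by rewrite !trmx_mul trmxK trmx_inv hs mulmxA.
Qed.

Lemma sum_delta (i : 'I_n) (G : 'I_n -> F) :
  \sum_(p < n) (i == p)%:R * G p = G i.
Proof.
rewrite (bigD1 i) //= eqxx mul1r big1 ?addr0 // => p /negbTE.
by rewrite eq_sym => ->; rewrite mul0r.
Qed.

End Helpers.
Section P.
Variables (F : fieldType) (n : nat).
Local Notation V := 'rV[F]_n.

Lemma row_exp (R : 'M[F]_n) (hs : R^T = R) k : row k R = \sum_(q < n) R q k *: @std_a F n q.
Proof.
rewrite {1}(row_sum_delta (row k R)); apply: eq_bigr => q _.
by rewrite mxE -{1}hs mxE.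
Qed.

Lemma Pcomp (circ : V -> V -> V) (hc : bilinear_op circ) (R : 'M[F]_n) (hs : R^T = R) i j k :
  Pten circ (@std_a F n) (std_b R) i j k =
  circ (row i R) (row j R) 0 k - circ (row i R) (row k R) 0 j
  + bsq circ (row k R) (row j R) 0 i.
Proof.
rewrite /Pten /tensor3 /std_b.
under eq_bigr => p _ do rewrite !big_split /= sumrN.
rewrite !big_split /= sumrN.
have ea : forall p (l : 'I_n), @std_a F n p 0 l = (l == p)%:R.
  by move=> p l; rewrite /std_a mxE eqxx.
congr (_ - _ + _).
- under eq_bigr => p _ do under eq_bigr => q _ do rewrite !ea -mulrA.
  under eq_bigr => p _ do rewrite -mulr_sumr.
  by rewrite sum_delta sum_delta.
- under eq_bigr => p _ do under eq_bigr => q _ do rewrite !ea -mulrA.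
  under eq_bigr => p _ do rewrite -mulr_sumr.
  rewrite sum_delta (row_exp R hs k) bil_sumr // summxE.
  by apply: eq_bigr => q _; rewrite mxE mxE mulrC.
- rewrite (row_exp R hs k) (row_exp R hs j) bil_suml; last exact: bsq_bil.
  rewrite summxE; apply: eq_bigr => p _.
  rewrite bil_sumr; last exact: bsq_bil.
  rewrite !mxE summxE mulr_sumr; apply: eq_bigr => q _; rewrite !mxE; ring.
Qed.

Lemma Lcomp (br : V -> V -> V) (hc : bilinear_op br) (R : 'M[F]_n) (hs : R^T = R) i j k :
  Lten br (@std_a F n) (std_b R) i j k =
  br (row i R) (row j R) 0 k + br (row i R) (row k R) 0 j
  - ssq br (row j R) (row k R) 0 i.
Proof.
rewrite /Lten /tensor3 /std_b.
under eq_bigr => p _ do rewrite !big_split /= sumrN.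
rewrite !big_split /= sumrN.
have ea : forall p (l : 'I_n), @std_a F n p 0 l = (l == p)%:R.
  by move=> p l; rewrite /std_a mxE eqxx.
congr (_ + _ - _).
- under eq_bigr => p _ do under eq_bigr => q _ do rewrite !ea -mulrA.
  under eq_bigr => p _ do rewrite -mulr_sumr.
  by rewrite sum_delta sum_delta.
- under eq_bigr => p _ do under eq_bigr => q _ do rewrite !ea -mulrA.
  under eq_bigr => p _ do rewrite -mulr_sumr.
  rewrite sum_delta (row_exp R hs k) bil_sumr // summxE.
  by apply: eq_bigr => q _; rewrite mxE mxE mulrC.
- rewrite (row_exp R hs k) (row_exp R hs j) bil_suml; last exact: ssq_bil.
  rewrite summxE; apply: eq_bigr => p _.
  rewrite bil_sumr; last exact: ssq_bil.
  rewrite !mxE summxE mulr_sumr; apply: eq_bigr => q _; rewrite !mxE; ring.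
Qed.
End P.

Theorem proposition3p22 (F : fieldType) (n : nat)
  (charF0 : [pchar F] =i pred0)
  (circ br : 'rV[F]_n -> 'rV[F]_n -> 'rV[F]_n)
  (hA : dual_pre_Poisson circ br)
  (R : 'M[F]_n) (hsym : symmetric_tensor R) (hnd : nondegenerate_tensor R) :
  PLYBE_solution circ br R <->
  (forall x y z,
     Bform R (circ x y) z = Bform R y (circ x z) + Bform R x (bsq circ y z)) /\
  (forall x y z,
     Bform R (br x y) z = - Bform R y (br x z) + Bform R x (ssq br y z)).
Proof.
move: hA => [hc [hb _]].
have hR : R \in unitmx := hnd.
have hs : R^T = R := hsym.
have Brow : forall a (w : 'rV[F]_n), Bform R (row a R) w = w 0 a.
  by move=> a w; apply: B_rowl.
have Brow' : forall a (w : 'rV[F]_n), Bform R w (row a R) = w 0 a.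
  by move=> a w; rewrite B_sym // Brow.
have bsqN : forall u v : 'rV[F]_n, bsq circ u v = - bsq circ v u.
  by move=> u v; rewrite /bsq opprB.
have hq : bilinear_op (bsq circ) by apply: bsq_bil.
have hr : bilinear_op (ssq br) by apply: ssq_bil.
split.
- move=> [hP hL]; split.
  + move=> x y z; apply/eqP; rewrite -subr_eq0; apply/eqP.
    apply: (@lin_basis F n (fun x => Bform R (circ x y) z -
       (Bform R y (circ x z) + Bform R x (bsq circ y z))) _ R hR _ x).
      by move=> a x1 x2 /=; rewrite ?hc.1 ?hc.2 ?hq.1 ?hq.2 ?B_linl ?B_linr; ring.
    move=> i /=.
    apply: (@lin_basis F n (fun y => Bform R (circ (row i R) y) z -
       (Bform R y (circ (row i R) z) + Bform R (row i R) (bsq circ y z))) _ R hR _ y).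
      by move=> a x1 x2 /=; rewrite ?hc.1 ?hc.2 ?hq.1 ?hq.2 ?B_linl ?B_linr; ring.
    move=> j /=.
    apply: (@lin_basis F n (fun z => Bform R (circ (row i R) (row j R)) z -
       (Bform R (row j R) (circ (row i R) z) + Bform R (row i R) (bsq circ (row j R) z))) _ R hR _ z).
      by move=> a x1 x2 /=; rewrite ?hc.1 ?hc.2 ?hq.1 ?hq.2 ?B_linl ?B_linr; ring.
    move=> k /=.
    move: (hP i j k); rewrite Pcomp // bsqN mxE => h.
    rewrite Brow' !Brow -[RHS]h; ring.
  + move=> x y z; apply/eqP; rewrite -subr_eq0; apply/eqP.
    apply: (@lin_basis F n (fun x => Bform R (br x y) z -
       (- Bform R y (br x z) + Bform R x (ssq br y z))) _ R hR _ x).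
      by move=> a x1 x2 /=; rewrite ?hb.1 ?hb.2 ?hr.1 ?hr.2 ?B_linl ?B_linr; ring.
    move=> i /=.
    apply: (@lin_basis F n (fun y => Bform R (br (row i R) y) z -
       (- Bform R y (br (row i R) z) + Bform R (row i R) (ssq br y z))) _ R hR _ y).
      by move=> a x1 x2 /=; rewrite ?hb.1 ?hb.2 ?hr.1 ?hr.2 ?B_linl ?B_linr; ring.
    move=> j /=.
    apply: (@lin_basis F n (fun z => Bform R (br (row i R) (row j R)) z -
       (- Bform R (row j R) (br (row i R) z) + Bform R (row i R) (ssq br (row j R) z))) _ R hR _ z).
      by move=> a x1 x2 /=; rewrite ?hb.1 ?hb.2 ?hr.1 ?hr.2 ?B_linl ?B_linr; ring.
    move=> k /=.
    move: (hL i j k); rewrite Lcomp // => h.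
    rewrite Brow' !Brow -[RHS]h; ring.
- move=> [hC hB]; split=> i j k.
  + rewrite Pcomp //.
    have := hC (row i R) (row j R) (row k R); rewrite Brow' !Brow => ->.
    rewrite bsqN mxE; ring.
  + rewrite Lcomp //.
    have := hB (row i R) (row j R) (row k R); rewrite Brow' !Brow => ->.
    ring.
Qed.
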